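(* Let $(G,\precsim)$ be a compatible quasi-ordered abelian group such that $\precsim$ is an order (i.e. also antisymmetric) and $G$ is not isomorphic to $\mathbb{Z}/2\mathbb{Z}$. Then $(G,\precsim)$ is an ordered abelian group, i.e. $x\precsim y\Rightarrow x+z\precsim y+z$ for all $x,y,z\in G$.
   Context: A compatible quasi-ordered abelian group is an abelian group $G$ with a total quasi-order $\precsim$ (reflexive, transitive, any two elements comparable) such that, writing $a\sim b$ for $a\precsim b\wedge b\precsim a$: $(Q_1)$ $x\sim0\Rightarrow x=0$; $(Q_2)$ $x\precsim y\wedge y\not\sim z\Rightarrow x+z\precsim y+z$, for all $x,y,z$. *)

(* Defs.v *)
From mathcomp Require Import all_boot all_algebra.
Set Implicit Arguments. Unset Strict Implicit. Unset Printing Implicit Defensive.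
Import GRing.Theory.
Local Open Scope ring_scope.

Definition qequiv (G : Type) (le : G -> G -> Prop) (x y : G) : Prop :=
  le x y /\ le y x.

Definition total_quasi_order (G : Type) (le : G -> G -> Prop) : Prop :=
  (forall x, le x x) /\
  (forall x y z, le x y -> le y z -> le x z) /\
  (forall x y, le x y \/ le y x).

Definition compatible_qoag (G : zmodType) (le : G -> G -> Prop) : Prop :=
  total_quasi_order le /\
  (forall x : G, qequiv le x 0 -> x = 0) /\
  (forall x y z : G, le x y -> ~ qequiv le y z -> le (x + z) (y + z)).

Definition antisymmetric_rel (G : Type) (le : G -> G -> Prop) : Prop :=
  forall x y, le x y -> le y x -> x = y.

Definition iso_Z2 (G : zmodType) : Prop :=
  exists f : G -> 'Z_2, bijective f /\ forall x y, f (x + y) = f x + f y.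

(* Main.v *)
Require Import Defs.
From mathcomp Require Import all_boot all_algebra.
From Stdlib Require Import Classical.
Local Open Scope ring_scope.
Import GRing.Theory.

Lemma z2_iso (G : zmodType) (w : G) : w != 0 -> w + w = 0 ->
  (forall b : G, b != 0 -> b = w) -> iso_Z2 G.
Proof.
move=> w0 ww H.
exists (fun g => if g == 0 then (0 : 'Z_2) else 1); split.
  exists (fun k : 'Z_2 => if k == 0 then 0 else w).
    by move=> g /=; case: (eqVneq g 0) => [->|/H ->] /=; rewrite ?eqxx // (negbTE w0).
  move=> k /=; case: (eqVneq k 0) => [->|kn]; rewrite ?eqxx //.
  rewrite (negbTE w0).
  by case: k kn => [[|[|k']] Hk] //= _; apply/val_inj.
move=> x y.
case: (eqVneq x 0) => [->|/H ->]; first by rewrite !add0r.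
case: (eqVneq y 0) => [->|/H ->]; first by rewrite addr0 ?eqxx (negbTE w0) ?addr0.
by rewrite ww ?eqxx ?(negbTE w0); apply/val_inj.
Qed.

Theorem mainTheorem5 (G : zmodType) (le : G -> G -> Prop) :
  compatible_qoag le -> antisymmetric_rel le -> ~ iso_Z2 G ->
  forall x y z : G, le x y -> le (x + z) (y + z).
Proof.
move=> [[refl [trans tot]] [Q1 Q2]] anti niso.
have T : forall u v t, le u v -> v != t -> le (u + t) (v + t).
  move=> u v t uv vt; apply: Q2 => // [[a b]]; move/eqP: vt; apply; exact: anti.
move=> x y z xy.
case: (eqVneq y z) => [<-|yz]; last exact: T.
case: (eqVneq x y) => [->|xny]; first exact: refl.
case: (classic (exists a, a != y /\ a + a != 0)) => [[a [ay aa]]|Hn].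
  have h1 := T _ _ _ xy (ltac:(by rewrite eq_sym) : y != a).
  have h2 : y + a != y - a.
    apply: contra aa => /eqP e; apply/eqP.
    by move/(congr1 (fun t => t - y + a)): e; rewrite !(addrC y) !addrK addNr.
  have := T _ _ _ h1 h2.
  rewrite -!addrA; congr (le (x + _) (y + _)); by rewrite addrC subrK.
have HA : forall a, a != y -> a + a = 0.
  move=> a ay; apply/eqP; apply: NNPP => ne; apply: Hn; exists a; split => //.
  exact/negP.
have yy : y + y = 0.
  case: (eqVneq (y + y) 0) => // yy.
  have : - y != y.
    apply: contra yy => /eqP e; by rewrite -{1}e addNr.
  by move/HA; rewrite -opprD => /eqP; rewrite oppr_eq0 => /eqP.
have A2 : forall a : G, a + a = 0.
  by move=> a; case: (eqVneq a y) => [->|/HA].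
have h0 := T _ _ _ xy (ltac:(by rewrite eq_sym) : y != x).
rewrite A2 in h0.
set w := y + x in h0.
have w0 : w != 0.
  apply: contra xny => /eqP e; apply/eqP.
  by rewrite -[x]add0r -e /w -addrA A2 addr0.
have [b [b0 bw]] : exists b, b != 0 /\ b != w.
  apply: NNPP => ne; apply: niso; refine (@z2_iso G w w0 (A2 w) (fun b b0 => _)).
  apply/eqP; apply: NNPP => bw; apply: ne; exists b; split => //; exact/negP.
have h1 := T _ _ _ h0 (ltac:(by rewrite eq_sym) : w != b).
have h2 : w != w + b.
  apply: contra b0 => /eqP e; apply/eqP.
  by move/(congr1 (fun t => t - w)): e; rewrite subrr (addrC w) addrK.
have h3 := T _ _ _ h0 h2.
rewrite add0r addrA A2 add0r in h3.
rewrite add0r in h1.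
have e := anti _ _ h1 h3.
exfalso; move/eqP: w0; apply.
by move/(congr1 (fun t => t - b)): e; rewrite subrr addrK.
Qed.
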